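(* If the link function is unknown, the optimal policy cannot be identified from the transitions and the comparison probabilities, even when there are only two candidate link functions: there exist an episodic MDP (with horizon $H=2$, known transitions), two link functions $\sigma_1,\sigma_2$ and two reward functions $r^{(1)},r^{(2)}$ such that $\sigma_1(r^{(1)}(\tau)-r^{(1)}(\tau'))=\sigma_2(r^{(2)}(\tau)-r^{(2)}(\tau'))$ for all pairs of trajectories $\tau,\tau'$, while the optimal policy with respect to $r^{(1)}$ and the optimal policy with respect to $r^{(2)}$ differ (each is suboptimal for the other reward).
   Context: Episodic MDP with trajectories $\tau$; a comparison oracle with link function $\sigma$ and reward $r$ returns $\tau\succ\tau'$ with probability $\sigma(r(\tau)-r(\tau'))$. A policy is optimal for $r$ if it maximizes $\mathbb{E}_{\tau\sim\pi}[r(\tau)]$. *)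

(* Defs.v *)
From HB Require Import structures.
From mathcomp Require Import all_boot all_order all_algebra.
From mathcomp Require Import reals.
Set Implicit Arguments. Unset Strict Implicit. Unset Printing Implicit Defensive.
Import Order.TTheory GRing.Theory Num.Theory.
Local Open Scope ring_scope.

Section Episodic.
Variable R : realType.

(* Link function: strictly increasing, valued in [0,1], and
   sigma(x) + sigma(-x) = 1 (so that P(tau > tau') + P(tau' > tau) = 1). *)
Definition link_function (sigma : R -> R) : Prop :=
  (forall x, 0 <= sigma x <= 1) /\
  (forall x y, x < y -> sigma x < sigma y) /\
  (forall x, sigma x + sigma (- x) = 1).

Variables (S A : finType).

Definition is_dist (T : finType) (p : T -> R) : Prop :=
  (forall t, 0 <= p t) /\ \sum_(t : T) p t = 1.

Definition valid_mdp2 (mu : S -> R) (P : S -> A -> S -> R) : Prop :=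
  is_dist mu /\ (forall s a, is_dist (P s a)).

Definition traj := (S * A * S * A)%type.

Record policy2 := Policy2 {
  pol1 : S -> A -> R;
  pol2 : S * A * S -> A -> R
}.

Definition valid_policy2 (pi : policy2) : Prop :=
  (forall s, is_dist (pol1 pi s)) /\ (forall h, is_dist (pol2 pi h)).

Definition traj_prob (mu : S -> R) (P : S -> A -> S -> R) (pi : policy2)
  (tau : traj) : R :=
  let: (s1, a1, s2, a2) := tau in
  mu s1 * pol1 pi s1 a1 * P s1 a1 s2 * pol2 pi (s1, a1, s2) a2.

Definition expected_reward (mu : S -> R) (P : S -> A -> S -> R)
  (r : traj -> R) (pi : policy2) : R :=
  \sum_(tau : traj) traj_prob mu P pi tau * r tau.

Definition optimal_policy (mu : S -> R) (P : S -> A -> S -> R)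
  (r : traj -> R) (pi : policy2) : Prop :=
  valid_policy2 pi /\
  forall pi', valid_policy2 pi' ->
    expected_reward mu P r pi' <= expected_reward mu P r pi.

End Episodic.

(* Main.v *)
Require Import Defs.
From HB Require Import structures.
From mathcomp Require Import all_boot all_order all_algebra.
From mathcomp Require Import reals.
From mathcomp Require Import ring lra.
Import Order.TTheory GRing.Theory Num.Theory.
Local Open Scope ring_scope.

Section Aux.
Variable R : realType.

Definition q (x : R) : R := x / (1 + `|x|).
Definition s (x : R) : R := 2^-1 + q x / 2.
Definition c (x : R) : R := if x <= 1 then 1 else if x <= 2 then x else 2.
Definition phi (x : R) : R := x + 2 * (c x - c (- x)).

Lemma qE x : q x * (1 + `|x|) = x.
Proof. rewrite /q mulrVK // unitfE; apply/lt0r_neq0; have := normr_ge0 x; lra. Qed.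

Lemma q_bounds x : -1 < q x < 1.
Proof.
have := qE x; have hn := normr_ge0 x.
have [hx|hx] := leP 0 x.
  rewrite ger0_norm // => h; nra.
rewrite ltr0_norm // => h; nra.
Qed.

Lemma q_mono x y : x < y -> q x < q y.
Proof.
move=> hxy; have := qE x; have := qE y; have := q_bounds x; have := q_bounds y.
have [hx|hx] := leP 0 x; have [hy|hy] := leP 0 y.
- rewrite (ger0_norm hx) (ger0_norm hy); nra.
- lra.
- rewrite (ltr0_norm hx) (ger0_norm hy); nra.
- rewrite (ltr0_norm hx) (ltr0_norm hy); nra.
Qed.

Lemma qN x : q (- x) = - q x.
Proof. by rewrite /q normrN mulNr. Qed.

Lemma s_link : link_function s.
Proof.
split; [|split].
- move=> x; have := q_bounds x; rewrite /s => h; apply/andP; split; lra.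
- move=> x y /q_mono; rewrite /s; lra.
- move=> x; rewrite /s qN; lra.
Qed.

Lemma c_cases x : (x <= 1 /\ c x = 1) \/ (1 < x <= 2 /\ c x = x) \/ (2 < x /\ c x = 2).
Proof.
rewrite /c; case: (leP x 1) => h1; first by left.
case: (leP x 2) => h2; right; [left|right]; split => //; apply/andP; split => //.
Qed.

Lemma c_mono x y : x <= y -> c x <= c y.
Proof.
move=> h; case: (c_cases x) => [[? ->]|[[/andP[? ?] ->]|[? ->]]];
case: (c_cases y) => [[? ->]|[[/andP[? ?] ->]|[? ->]]]; lra.
Qed.

Lemma phi_mono x y : x < y -> phi x < phi y.
Proof.
move=> h; have h1 := @c_mono x y (ltW h); have h2 : -y <= -x by lra.
have := @c_mono _ _ h2; rewrite /phi; lra.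
Qed.

Lemma phiN x : phi (- x) = - phi x.
Proof. rewrite /phi opprK; lra. Qed.

Lemma s_phi_link : link_function (fun x => s (phi x)).
Proof.
have [h1 [h2 h3]] := s_link.
split; [|split].
- by move=> x; apply: h1.
- by move=> x y /phi_mono; apply: h2.
- by move=> x; rewrite phiN h3.
Qed.

Lemma sum_pair (I J : finType) (F : I * J -> R) :
  \sum_(p : I * J) F p = \sum_(i : I) \sum_(j : J) F (i, j).
Proof. by rewrite pair_big; apply: eq_bigr => -[i j]. Qed.

Definition mu0 (x : bool) : R := if x then 0 else 1.
Definition P0 (x : bool) (a : bool) (y : bool) : R :=
  if a then (if y then 4^-1 else 1 - 4^-1) else (if y then 0 else 1).
Definition g1 (a s : bool) : R := if a then (if s then 5 else 0) else (if s then 0 else 1).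
Definition g2 (a s : bool) : R := if a then (if s then 3 else 0) else (if s then 0 else 1).
Definition rr (g : bool -> bool -> R) (t : traj bool bool) : R := g t.1.1.2 t.1.2.

Lemma ER (pi : policy2 R bool bool) g :
  valid_policy2 pi ->
  expected_reward mu0 P0 (rr g) pi =
   pol1 pi false false * g false false +
   pol1 pi false true * ((1 - 4^-1) * g true false + 4^-1 * g true true).
Proof.
move=> [_ H2].
have H k : pol2 pi k false = 1 - pol2 pi k true.
  by have [_] := H2 k; rewrite big_bool /= => <-; ring.
rewrite /expected_reward !sum_pair !big_bool /= /mu0 /P0 !H /rr /=.
ring.
Qed.

Lemma phiP x y :
  (forall cx cy, (x <= 1 /\ cx = 1) \/ (1 < x <= 2 /\ cx = x) \/ (2 < x /\ cx = 2) ->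
     (-x <= 1 /\ cy = 1) \/ (1 < -x <= 2 /\ cy = -x) \/ (2 < -x /\ cy = 2) ->
     x + 2 * (cx - cy) = y) -> phi x = y.
Proof. by move=> h; apply: h; apply: c_cases. Qed.

End Aux.

Ltac solve_phi :=
  apply: phiP => cx cy;
  case=> [[? ->]|[[/andP[? ?] ->]|[? ->]]];
  case=> [[? ->]|[[/andP[? ?] ->]|[? ->]]]; lra.



Theorem lemma1 (R : realType) :
  exists (S A : finType) (mu : S -> R) (P : S -> A -> S -> R)
         (sigma1 sigma2 : R -> R) (r1 r2 : traj S A -> R),
    valid_mdp2 mu P /\
    link_function sigma1 /\ link_function sigma2 /\
    (forall tau tau' : traj S A,
        sigma1 (r1 tau - r1 tau') = sigma2 (r2 tau - r2 tau')) /\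
    (exists pi, optimal_policy mu P r1 pi) /\
    (exists pi, optimal_policy mu P r2 pi) /\
    (forall pi : policy2 R S A,
        optimal_policy mu P r1 pi -> ~ optimal_policy mu P r2 pi).
Proof.
exists bool, bool, (@mu0 R), (@P0 R), (@s R), (fun x => @s R (@phi R x)),
  (@rr R (@g1 R)), (@rr R (@g2 R)).
pose piA := Policy2 (fun (_ : bool) (a : bool) => if a then 1 else 0 : R)
                    (fun (_ : bool * bool * bool) (a : bool) => if a then 1 else 0 : R).
pose piB := Policy2 (fun (_ : bool) (a : bool) => if a then 0 else 1 : R)
                    (fun (_ : bool * bool * bool) (a : bool) => if a then 1 else 0 : R).
have dA : forall b : bool, is_dist (fun a : bool => if a then 1 else 0 : R).
  move=> _; split; first by case.
  by rewrite big_bool /= addr0.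
have dB : forall b : bool, is_dist (fun a : bool => if a then 0 else 1 : R).
  move=> _; split; first by case.
  by rewrite big_bool /= add0r.
have vA : valid_policy2 piA by split => ?; exact: (dA true).
have vB : valid_policy2 piB by split => ?; [exact: (dB true) | exact: (dA true)].
have EA1 : expected_reward (@mu0 R) (@P0 R) (@rr R (@g1 R)) piA = 5 / 4.
  rewrite ER //= /g1 /=; field; done.
have EB2 : expected_reward (@mu0 R) (@P0 R) (@rr R (@g2 R)) piB = 1.
  rewrite ER //= /g2 /=; field; done.
have key : forall pi : policy2 R bool bool, valid_policy2 pi ->
  [/\ 0 <= pol1 pi false false, 0 <= pol1 pi false true &
      pol1 pi false false + pol1 pi false true = 1].
  move=> pi v; have [H1 _] := v; have [h1 h2] := H1 false.
  split; [exact: h1 | exact: h1 |].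
  by rewrite -h2 big_bool addrC.
split; last split; last split; last split; last split; last split.
- split; first by split; [case | rewrite big_bool /mu0 /= add0r].
  move=> x a; split; first by case: a; case => /=; lra.
  by rewrite big_bool /P0; case: a => /=; lra.
- exact: s_link.
- exact: s_phi_link.
- move=> [[[s1 a1] s2] a2] [[[s1' a1'] s2'] a2']; rewrite /rr /g1 /g2 /=.
  by case: a1; case: s2; case: a1'; case: s2'; congr s; symmetry; solve_phi.
- exists piA; split => // pi' v; rewrite EA1 ER //.
  have [? ? ?] := key _ v; rewrite /g1 /=; lra.
- exists piB; split => // pi' v; rewrite EB2 ER //.
  have [? ? ?] := key _ v; rewrite /g2 /=; lra.
- move=> pi [v o1] [_ o2].
  have := o1 _ vA; have := o2 _ vB; rewrite EA1 EB2 !ER //.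
  have [? ? ?] := key _ v; rewrite /g1 /g2 /=; lra.
Qed.
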